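(* Let $v_1,\dots,v_{d+1}$ be the vertices of a $d$-simplex in general position. Let $1\le i\le d$, let $(\Gamma,\Delta)$ be a partition of $[d]=\{1,\dots,d\}$ with $|\Gamma|=i$, let $\delta=(\delta(1),\dots,\delta(d-i))$ be a fixed ordering of $\Delta$ and $\gamma=(\gamma(1),\dots,\gamma(i))$ a fixed ordering of $\Gamma$. Let $\tilde{\mathfrak S}_{d,\delta}$ be the set of permutations of $[d]$ whose one-line notation is $(\gamma'(1),\dots,\gamma'(i),\delta(1),\dots,\delta(d-i))$ for some ordering $\gamma'$ of $\Gamma$, and let $(\gamma,\delta)$ denote the permutation $(\gamma(1),\dots,\gamma(i),\delta(1),\dots,\delta(d-i))$. Then $$\sum_{\sigma\in\tilde{\mathfrak S}_{d,\delta}}\operatorname{sign}(\sigma)\prod_{j=1}^i\hat z(\sigma,j)=(-1)^{i(i-1)/2}\operatorname{sign}((\gamma,\delta))\det\hat X((\gamma,\delta),i).$$ In particular, $\sum_{\sigma\in\mathfrak S_d}\operatorname{sign}(\sigma)\prod_{j=1}^d\hat z(\sigma,j)=(-1)^{d(d-1)/2}\det\hat X(\mathbf 1,d)$.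
   Context: Write $v_i=(x_{i,1},\dots,x_{i,d})$ and $\hat x_{r,c}=x_{r,c}-x_{d+1,c}$. $\pi^{(j)}$ forgets the last $j$ coordinates; general position means that for every $0\le k\le d-1$ and every $(k+1)$-subset $U$ of the vertices, $\pi^{(d-k)}(\mathrm{conv}(U))$ is a $k$-simplex. For $\sigma\in\mathfrak S_d$, $1\le k\le d$: $\hat X(\sigma,k)$ is the $k\times k$ matrix with entries $\hat x_{\sigma(r),c}$ ($1\le r,c\le k$); $\hat Y(\sigma,k)$ is the $k\times k$ matrix with rows $(1,\hat x_{\sigma(r),1},\dots,\hat x_{\sigma(r),k-1})$; $\hat z(\sigma,k)=\det\hat X(\sigma,k)/\det\hat Y(\sigma,k)$. $\mathbf 1$ is the identity permutation; $\operatorname{sign}(\sigma)$ is the sign of the permutation. *)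

(* Defs.v *)
From mathcomp Require Import all_boot all_order all_algebra all_fingroup.
Set Implicit Arguments. Unset Strict Implicit. Unset Printing Implicit Defensive.
Import GRing.Theory Num.Theory.
Local Open Scope ring_scope.

Section SimplexDefs.
Variable R : realFieldType.

Definition aff_indep (I : finType) (n : nat) (U : {set I}) (p : I -> 'rV[R]_n) :=
  forall a : I -> R, \sum_(j in U) a j = 0 -> \sum_(j in U) a j *: p j = 0 ->
    forall j, j \in U -> a j = 0.

(* Vertices v_1..v_{d+1} are the rows of V : 'M_(d+1, d); vertex d+1 is ord_max. *)
Definition vertex (d : nat) (V : 'M[R]_(d.+1, d)) (j : 'I_d.+1) : 'rV[R]_d := row j V.

Definition simplex_vertices (d : nat) (V : 'M[R]_(d.+1, d)) :=
  aff_indep [set: 'I_d.+1] (vertex V).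

Definition proj_first (d k : nat) (hk : (k <= d)%N) (x : 'rV[R]_d) : 'rV[R]_k :=
  \row_(c < k) x 0 (widen_ord hk c).

(* General position: for every 0 <= k <= d-1 and every (k+1)-subset U of the
   vertices, the projections to the first k coordinates of the points of U are
   affinely independent, i.e. pi^{(d-k)}(conv U) is a k-simplex. *)
Definition general_position (d : nat) (V : 'M[R]_(d.+1, d)) :=
  forall (k : 'I_d) (U : {set 'I_d.+1}), #|U| = k.+1 ->
    aff_indep U (fun j => proj_first (ltnW (ltn_ord k)) (vertex V j)).

Definition ord_le (d : nat) (k : 'I_d.+1) : (k <= d)%N := ltn_ord k.
Definition wid (d : nat) (k : 'I_d.+1) : 'I_k -> 'I_d := widen_ord (ord_le k).

(* \hat x_{r,c} = x_{r,c} - x_{d+1,c}, for r, c in [d] (0-based here). *)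
Definition xhat (d : nat) (V : 'M[R]_(d.+1, d)) (r c : 'I_d) : R :=
  V (widen_ord (leqnSn d) r) c - V ord_max c.

(* nat-indexed column access (out-of-range values are never used below). *)
Definition xhatn (d : nat) (V : 'M[R]_(d.+1, d)) (r : 'I_d) (c : nat) : R :=
  if insub c is Some c' then xhat V r c' else 0.

Definition Xhat (d : nat) (V : 'M[R]_(d.+1, d)) (s : 'S_d) (k : 'I_d.+1) : 'M[R]_k :=
  \matrix_(r < k, c < k) xhat V (s (wid r)) (wid c).

(* \hat Y(sigma,k): k x k matrix with rows
   (1, \hat x_{sigma(r),1}, ..., \hat x_{sigma(r),k-1}) *)
Definition Yhat (d : nat) (V : 'M[R]_(d.+1, d)) (s : 'S_d) (k : 'I_d.+1) : 'M[R]_k :=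
  \matrix_(r < k, c < k) (if (c == 0 :> nat) then 1 else xhatn V (s (wid r)) c.-1).

Definition zhat (d : nat) (V : 'M[R]_(d.+1, d)) (s : 'S_d) (k : 'I_d.+1) : R :=
  \det (Xhat V s k) / \det (Yhat V s k).

End SimplexDefs.

(* Main.v *)
Require Import Defs.
From mathcomp Require Import all_boot all_order all_algebra all_fingroup.
From mathcomp Require Import ring zify.
Set Implicit Arguments. Unset Strict Implicit. Unset Printing Implicit Defensive.
Import GRing.Theory Num.Theory.
Local Open Scope ring_scope.

Section Key.
Variable R : comNzRingType.

Lemma key k (f : nat -> nat -> R) :
 \det (\matrix_(r < k.+1, c < k.+1) (if c == 0%N :> nat then 1 else f r c.-1)) =
 (-1)^+k * (\det (\matrix_(r<k,c<k) f r c)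
   - \sum_(m<k) \sum_(c<k) f k c * cofactor (\matrix_(r<k,c<k) f r c) m c).
Proof.
set Y := \matrix_(r < k.+1, c < k.+1) _.
set X := \matrix_(r<k,c<k) f r c.
rewrite (expand_det_row _ ord_max) big_ord_recl.
have E0 : row' ord_max (col' ord0 Y) = X.
  by apply/matrixP => r c; rewrite !mxE lift0 lift_max.
have Ec : forall c : 'I_k, cofactor Y ord_max (lift ord0 c)
     = - (-1)^+k * \sum_(m<k) cofactor X m c.
  move=> c.
  have k0 : (0 < k)%N by apply: leq_ltn_trans (ltn_ord c).
  rewrite /cofactor (expand_det_col _ (Ordinal k0)) mulr_sumr mulr_sumr.
  apply: eq_bigr => r _; rewrite /cofactor.
  have -> : row' r (col' (Ordinal k0) (row' ord_max (col' (lift ord0 c) Y)))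
       = row' r (col' c X).
    apply/matrixP => a b; rewrite !mxE lift_max /=.
    by rewrite /bump /= !ltnS addnS.
  rewrite !mxE lift_max /= mul1r.
  rewrite !exprD !expr0 /=. ring.
under eq_bigr => c _ do rewrite Ec !mxE /=.
rewrite [cofactor Y _ _]/cofactor E0 !mxE /=.
rewrite exchange_big /= mulrBr addn0 mul1r.

congr (_ + _).
rewrite -mulrN -sumrN mulr_sumr; apply: eq_bigr => c _.
rewrite -mulr_sumr. ring.
Qed.
End Key.

Section Main.
Variables (R : realFieldType) (d : nat) (V : 'M[R]_(d.+1, d)).

Definition Fn (t : 'S_d) (r c : nat) : R :=
  if insub r is Some r' then xhatn V (t r') c else 0.
Definition Xn t n : 'M[R]_n := \matrix_(r < n, c < n) Fn t r c.
Definition Yn t n : 'M[R]_n :=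
  \matrix_(r < n, c < n) (if c == 0%N :> nat then 1 else Fn t r c.-1).
Definition zn t n := \det (Xn t n) / \det (Yn t n).

Lemma insubW n (hn : (n <= d)%N) (r : 'I_n) :
  insub (r : nat) = Some (widen_ord hn r) :> option 'I_d.
Proof. exact: (valK (widen_ord hn r)). Qed.

Lemma XhatE s (j : 'I_d.+1) : Xhat V s j = Xn s j.
Proof.
apply/matrixP => r c; rewrite !mxE /Fn (insubW (ord_le j)) /xhatn.
by rewrite (insubW (ord_le j)).
Qed.

Lemma YhatE s (j : 'I_d.+1) : Yhat V s j = Yn s j.
Proof.
by apply/matrixP => r c; rewrite !mxE /Fn (insubW (ord_le j)).
Qed.

Lemma zhatE s (j : 'I_d.+1) : zhat V s j = zn s j.
Proof. by rewrite /zhat /zn XhatE YhatE. Qed.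

Definition agree k (s t : 'S_d) := [forall r : 'I_d, (k <= r)%N ==> (s r == t r)].
Definition G k t := \sum_(s : 'S_d | agree k s t)
   (-1) ^+ s * \prod_(j < d.+1 | (0 < j <= k)%N) zn s j.

Lemma bound k s t (x : 'I_d) : agree k.+1 s t -> (x <= k)%N -> ((t^-1)%g (s x) <= k)%N.
Proof.
move=> /forallP hA hx; rewrite leqNgt; apply/negP => hy.
have := implyP (hA (t^-1 (s x))%g) hy; rewrite permKV => /eqP /perm_inj hxy.
by move: hy; rewrite hxy ltnNge hx.
Qed.

Lemma L1 k s t : (k < d)%N -> agree k.+1 s t -> zn s k.+1 = zn t k.+1.
Proof.
move=> hk hA.
pose f (r : 'I_k.+1) : 'I_k.+1 := inord (t^-1 (s (widen_ord hk r)))%g.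
have hb : forall r : 'I_k.+1, ((t^-1)%g (s (widen_ord hk r)) <= k)%N.
  by move=> r; apply: bound hA _; rewrite /= -ltnS.
have finj : injective f.
  move=> a b; rewrite /f => /(congr1 (@nat_of_ord _)); rewrite !inordK ?ltnS ?hb //.
  by move/val_inj/perm_inj/perm_inj/(congr1 val) => /= /val_inj.
pose rho := perm finj.
have hr : forall r, t (widen_ord hk (rho r)) = s (widen_ord hk r).
  move=> r; rewrite permE /f.
  have -> : widen_ord hk (inord (t^-1 (s (widen_ord hk r)))%g) = (t^-1 (s (widen_ord hk r)))%g.
    by apply/val_inj; rewrite /= inordK // ltnS hb.
  by rewrite permKV.
have EX : Xn s k.+1 = row_perm rho (Xn t k.+1).
  by apply/matrixP => r c; rewrite !mxE /Fn !(insubW hk) hr.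
have EY : Yn s k.+1 = row_perm rho (Yn t k.+1).
  by apply/matrixP => r c; rewrite !mxE /Fn !(insubW hk) hr.
rewrite /zn EX EY !row_permE !det_mulmx det_perm invfM mulrACA divff ?mul1r //.
by rewrite signr_eq0.
Qed.


Lemma L2 k (hk : (k < d)%N) t (F : 'S_d -> R) :
  \sum_(s | agree k.+1 s t) F s =
  \sum_(m : 'I_d | (m <= k)%N) \sum_(s | agree k s (tperm m (Ordinal hk) * t)%g) F s.
Proof.
set kk := Ordinal hk.
rewrite (partition_big (fun s : 'S_d => (t^-1)%g (s kk)) (fun m : 'I_d => (m <= k)%N)).
  apply: eq_bigr => m hm; apply: eq_bigl => s; apply/idP/idP.
    case/andP => /forallP hA /eqP hm'; apply/forallP => r; apply/implyP => hr.
    rewrite permM.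
    case: (ltngtP k r) hr => // [hkr _ | ekr _].
      rewrite tpermD; first exact: (implyP (hA r) hkr).
        by rewrite -val_eqE /= neq_ltn (leq_ltn_trans hm hkr).
      by rewrite -val_eqE /= neq_ltn hkr.
    have -> : r = kk by apply/val_inj.
    by rewrite tpermR -hm' permKV.
  move=> /forallP hA; apply/andP; split.
    apply/forallP => r; apply/implyP => hr.
    have := implyP (hA r) (ltnW hr); rewrite permM tpermD //.
      by rewrite -val_eqE /= neq_ltn (leq_ltn_trans hm hr).
    by rewrite -val_eqE /= neq_ltn hr.
  have := implyP (hA kk) (leqnn k); rewrite permM tpermR => /eqP ->.
  by rewrite permK.
by move=> s hA; apply: bound hA _.
Qed.

Lemma sqr_sign n : (-1) ^+ n * (-1) ^+ n = 1 :> R.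
Proof. by rewrite -exprD addnn -mul2n exprM sqrrN !expr1n. Qed.

Lemma L3 k (hk : (k < d)%N) t :
  \sum_(m : 'I_d | (m <= k)%N)
     (-1) ^+ (tperm m (Ordinal hk) * t)%g * \det (Xn (tperm m (Ordinal hk) * t)%g k)
  = (-1) ^+ t * (-1) ^+ k * \det (Yn t k.+1).
Proof.
set kk := Ordinal hk.
rewrite (bigD1 kk) //= tperm1 mul1g.
rewrite /Yn key -/(Xn t k).
rewrite (eq_bigl (fun m : 'I_d => (m < k)%N)); last first.
  by move=> m /=; rewrite ltn_neqAle -val_eqE /= andbC.
rewrite (big_ord_narrow (ltnW hk)).
have Hm : forall m0 : 'I_k, let m := widen_ord (ltnW hk) m0 in
   (-1) ^+ (tperm m kk * t)%g * \det (Xn (tperm m kk * t)%g k)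
   = - ((-1) ^+ t * \sum_(c < k) Fn t k c * cofactor (Xn t k) m0 c).
  move=> m0 m.
  have mk : m != kk by rewrite -val_eqE /= neq_ltn ltn_ord.
  rewrite odd_permM odd_tperm mk /= signrN mulNr; congr (- (_ * _)).
  rewrite (expand_det_row _ m0); apply: eq_bigr => c _.
  congr (_ * _).
    rewrite !mxE /Fn (insubW (ltnW hk)) (insubW (leqnn d) kk) permM.
    have -> : widen_ord (leqnn d) kk = kk by apply/val_inj.
    by rewrite -/m tpermL.
  rewrite /cofactor; congr (_ * \det _); apply/matrixP => a b; rewrite !mxE.
  rewrite /Fn (insubW (ltnW hk)) permM tpermD //.
    apply/negP => /eqP E; have : m0 == lift m0 a by apply/eqP/val_inj; exact: (congr1 (@nat_of_ord _) E).
    by rewrite (negbTE (neq_lift _ _)).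
  by apply/negP => /eqP /(congr1 (@nat_of_ord _)) /= E; move: (ltn_ord (lift m0 a)); rewrite /= -E ltnn.
under eq_bigr => m0 _ do rewrite Hm.
rewrite sumrN -mulr_sumr mulrA -[_ * (-1) ^+ k * _]mulrA sqr_sign mulr1 mulrBr.
by rewrite mulr_sumr.
Qed.


Lemma Ynz (hgp : general_position V) t j :
  (0 < j)%N -> (j <= d)%N -> \det (Yn t j) != 0.
Proof.
move=> j0 hj; apply/negP => /det0P [v vn0 vY].
have kd : (j.-1 < d)%N by rewrite prednK.
pose k0 : 'I_d := Ordinal kd.
pose g (r : 'I_j) : 'I_d.+1 := widen_ord (leqnSn d) (t (widen_ord hj r)).
have ginj : injective g.
  move=> a b /(congr1 (@nat_of_ord _)) /= /val_inj /perm_inj.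
  by move/(congr1 (@nat_of_ord _)) => /= /val_inj.
pose U := [set g r | r in [set: 'I_j]].
have cU : #|U| = k0.+1 by rewrite card_imset // cardsT card_ord /= prednK.
have hind := hgp k0 U cU.
pose a (x : 'I_d.+1) := \sum_(r | g r == x) v ord0 r.
have ag : forall r, a (g r) = v ord0 r.
  move=> r; rewrite /a; under eq_bigl => r' do rewrite (inj_eq ginj).
  by rewrite big_pred1_eq.
have sv : \sum_i v ord0 i = 0.
  have := congr1 (fun M : 'M[R]_(1,j) => M ord0 (Ordinal j0)) vY; rewrite /= !mxE.
  move=> H; apply: etrans _ H; apply: eq_bigr => r _; by rewrite /Yn mxE /= mulr1.
have s1 : \sum_(x in U) a x = 0.
  rewrite big_imset /=; last by move=> x y _ _; apply: ginj.
  under eq_bigr do rewrite ag.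
  rewrite (eq_bigl (fun _ => true)) => [|r]; last by rewrite in_setT.
  exact: sv.
have s2 : \sum_(x in U) a x *: proj_first (ltnW (ltn_ord k0)) (vertex V x) = 0.
  rewrite big_imset /=; last by move=> x y _ _; apply: ginj.
  apply/rowP => b; rewrite summxE mxE.
  have hb : (b.+1 < j)%N by move: (ltn_ord b); rewrite /= -ltnS prednK.
  have := congr1 (fun M : 'M[R]_(1,j) => M ord0 (Ordinal hb)) vY; rewrite /= !mxE.
  move=> H; apply: etrans _ H.
  rewrite (eq_bigl (fun _ => true)) => [|r]; last by rewrite in_setT.
  under [RHS]eq_bigr do rewrite /Yn mxE /= /Fn (insubW hj) /xhatn (insubW (ltnW (ltn_ord k0))) /xhat mulrBr.
  rewrite sumrB -mulr_suml sv mul0r subr0.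
  apply: eq_bigr => r _; rewrite ag !mxE; congr (_ * V _ _); exact/val_inj.
have hz := hind a s1 s2.
apply/negP: vn0; rewrite negbK; apply/eqP/rowP => r; rewrite mxE -ag.
by apply: hz; apply: imset_f; rewrite in_setT.
Qed.


Lemma predS j k : ((0 < j <= k.+1) && (j != k.+1))%N = (0 < j <= k)%N.
Proof. lia. Qed.

Lemma sgnS k : ((k.+1 * (k.+1 - 1)) %/ 2 = (k * (k - 1)) %/ 2 + k)%N.
Proof.
case: k => [//|k].
rewrite !subn1 /= [RHS]addnC -(divnMDl _ _ (isT : (0 < 2)%N)); congr (_ %/ 2)%N.
ring.
Qed.

Lemma main_ind (hgp : general_position V) k : (k <= d)%N -> forall t,
  G k t = (-1) ^+ ((k * (k - 1)) %/ 2)%N * (-1) ^+ t * \det (Xn t k).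
Proof.
elim: k => [|k IH] hk t.
  rewrite /G (eq_bigl (pred1 t)) => [|s]; last first.
    apply/forallP/eqP => [hA|->]; last by move=> r; apply/implyP.
    by apply/permP => r; apply/eqP/(implyP (hA r)).
  rewrite big_pred1_eq big_pred0 => [|j]; last by case: j => -[].
  by rewrite det_mx00 !mulr1 mul0n div0n expr0 mul1r.
have hkd : (k < d)%N := hk.
rewrite /G.
have Hp : forall s, \prod_(j < d.+1 | (0 < j <= k.+1)%N) zn s j
    = (\prod_(j < d.+1 | (0 < j <= k)%N) zn s j) * zn s k.+1.
  move=> s; rewrite (bigD1 (inord k.+1)) /=; last by rewrite inordK ?leqnn ?ltnS.
  rewrite inordK ?ltnS // mulrC; congr (_ * _); apply: eq_bigl => j.
  rewrite -val_eqE /= inordK //.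
  exact: predS.
under eq_bigr => s hs do rewrite Hp (L1 hkd hs) mulrA.
rewrite -mulr_suml (L2 hkd).
under eq_bigr => m _ do rewrite -/(G k _) (IH (ltnW hk)) -mulrA.
rewrite -mulr_sumr L3.
rewrite sgnS exprD /zn.
have := Ynz hgp t (ltn0Sn k) hk; set Y := \det (Yn t k.+1) => hY.
set a := (-1) ^+ ((k * (k - 1)) %/ 2)%N; set b := (-1) ^+ t; set c := (-1) ^+ k; set X := \det _.
transitivity (a * b * c * X * (Y / Y)); first by ring.
by rewrite divff // mulr1; ring.
Qed.

End Main.

Unset Implicit Arguments.
Theorem mainTheorem17 (R : realFieldType) (d : nat) (V : 'M[R]_(d.+1, d))
  (hsimp : simplex_vertices V) (hgp : general_position V)
  (i : nat) (hi1 : (1 <= i)%N) (hid : (i <= d)%N)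
  (Gamma : {set 'I_d}) (hG : #|Gamma| = i)
  (tau : 'S_d) (htau : forall r : 'I_d, (tau r \in Gamma) = (r < i)%N) :
  (\sum_(s : 'S_d | [forall r : 'I_d, (i <= r)%N ==> (s r == tau r)])
      (-1) ^+ s * \prod_(j < d.+1 | (0 < j <= i)%N) zhat V s j
   = (-1) ^+ ((i * (i - 1)) %/ 2)%N * (-1) ^+ tau * \det (Xhat V tau (inord i)))
  /\
  (\sum_(s : 'S_d) (-1) ^+ s * \prod_(j < d.+1 | (0 < j)%N) zhat V s j
   = (-1) ^+ ((d * (d - 1)) %/ 2)%N * \det (Xhat V 1 ord_max)).
Proof.
split.
  rewrite XhatE inordK ?ltnS // -(main_ind hgp hid tau) /G /agree.
  by apply: eq_bigr => s _; congr (_ * _); apply: eq_bigr => j _; rewrite zhatE.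
rewrite XhatE /=.
have := main_ind hgp (leqnn d) 1%g; rewrite odd_perm1 /= expr0 mulr1 /G /agree => <-.
rewrite [RHS](eq_bigl (fun _ => true)) => [|s]; last first.
  by apply/forallP => r; rewrite leqNgt ltn_ord.
apply: eq_bigr => s _; congr (_ * _).
rewrite (eq_bigl (fun j : 'I_d.+1 => (0 < j <= d)%N)) => [|j]; last by have := ltn_ord j; rewrite ltnS => ->; rewrite andbT.
by apply: eq_bigr => j _; rewrite zhatE.
Qed.
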